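(* Let $n\ge 2$, let $a_1,\dots,a_n>0$ and $b_1,\dots,b_n\in\mathbb{R}$, and consider the decoupled linear vector field $\dot x_j=-a_jx_j+b_j$ ($j=1,\dots,n$) on $\mathbb{R}^n$, with equilibrium point $x_e=(b_1/a_1,\dots,b_n/a_n)$. Let $\mu_2=\{x\in\mathbb{R}^n : x_{j,\min}\le x_j\le x_{j,\max},\ j=1,\dots,n\}$ be a box (the phase constraint), and let $\lambda\subseteq\mu_2$ be a jump-set. Define the extended jump-set $$\lambda_{\mathrm{ext}}=\{x\in\mu_2:\ \exists t\ge 0 \text{ such that the solution of the vector field starting at } x \text{ lies in } \lambda \text{ at time } t\}.$$ If the equilibrium point $x_e$ is strictly included in $\lambda$, then $\lambda_{\mathrm{ext}}=\mu_2$; in particular the equilibrium point can be reached.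
   Context: Setting: a phase $l_i$ of a hybrid automaton has continuous dynamics given by the vector field above, and a phase constraint $\mu_2(l_i)=\mu_2$ (a box with faces orthogonal to the coordinate axes). The jump-set from phase $l_i$ to the next phase $l_{i+1}$ is $\lambda=\mu_2(l_i)\cap \mu_3^{-1}(X)$, where $\mu_3$ is the reset map of the transition and $X$ is the target set in phase $l_{i+1}$; in particular $\lambda\subseteq\mu_2$. ''Strictly included'' means $x_e$ lies in the interior of $\lambda$. *)

(* Defs.v *)
From HB Require Import structures.
From mathcomp Require Import all_boot all_order all_algebra.
From mathcomp Require Import all_classical all_reals all_analysis.
Set Implicit Arguments. Unset Strict Implicit. Unset Printing Implicit Defensive.
Import Order.TTheory GRing.Theory Num.Theory.
Import numFieldNormedType.Exports.
Local Open Scope classical_set_scope.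
Local Open Scope ring_scope.

Definition linfield (R : realType) (n : nat) (a b : 'I_n -> R)
  (x : 'rV[R]_n) : 'rV[R]_n := \row_j (- a j * x ord0 j + b j).

Definition equilibrium (R : realType) (n : nat) (a b : 'I_n -> R) : 'rV[R]_n :=
  \row_j (b j / a j).

Definition is_solution (R : realType) (n : nat) (a b : 'I_n -> R)
  (x : 'rV[R]_n) (phi : R -> 'rV[R]_n) : Prop :=
  phi 0 = x /\ forall t : R, is_derive t (1 : R) phi (linfield a b (phi t)).

Definition box (R : realType) (n : nat) (xmin xmax : 'I_n -> R) : set 'rV[R]_n :=
  [set x | forall j, xmin j <= x ord0 j <= xmax j].

Definition ext_jump_set (R : realType) (n : nat) (a b : 'I_n -> R)
  (mu2 lam : set 'rV[R]_n) : set 'rV[R]_n :=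
  [set x | mu2 x /\ exists phi, is_solution a b x phi /\
                    exists t : R, 0 <= t /\ lam (phi t)].

(* Main.v *)
Require Import Defs.
From HB Require Import structures.
From mathcomp Require Import all_boot all_order all_algebra.
From mathcomp Require Import all_classical all_reals all_analysis.
From mathcomp Require Import ring.
Import Order.TTheory GRing.Theory Num.Theory.
Import numFieldNormedType.Exports.
Local Open Scope classical_set_scope.
Local Open Scope ring_scope.

Lemma comp_deriv (R : realType) (a c d t : R) :
  is_derive t 1 (fun s => c + d * expR (- a * s)) (d * (expR (- a * t) * - a)).
Proof.
have h1 : is_derive t (1:R) (fun s : R => - a * s) (- a).
  have := is_deriveZ (-a) (is_derive_id t (1:R)).
  by rewrite /GRing.scale /= mulr1.
have h2 : is_derive t (1:R) (expR \o (fun s : R => - a * s)) (expR (- a * t) * - a).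
  exact: is_derive1_comp.
have h4 : is_derive t (1:R) (fun s => d * expR (- a * s)) (d * (expR (- a * t) * - a)).
  exact: (is_deriveZ d h2).
have := is_deriveD (is_derive_cst c t (1:R)) h4.
by rewrite add0r.
Qed.

Arguments comp_deriv {R}.

Definition sol (R : realType) (n : nat) (a b : 'I_n -> R) (x : 'rV[R]_n) (s : R) : 'rV[R]_n :=
  \row_j (b j / a j + (x ord0 j - b j / a j) * expR (- a j * s)).

Arguments sol {R n}.

Lemma sol_is_solution (R : realType) (n : nat) (a b : 'I_n -> R) (x : 'rV[R]_n)
  (ha : forall j, 0 < a j) : is_solution a b x (sol a b x).
Proof.
split.
  apply/matrixP => i j; rewrite mxE mulr0 expR0 mulr1 addrC subrK.
  by rewrite (ord1 i).
move=> t.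
have ent : forall i j, (fun s => sol a b x s i j) =
   (fun s => b j / a j + (x ord0 j - b j / a j) * expR (- a j * s)).
  by move=> i j; apply/funext => s; rewrite mxE.
apply: DeriveDef.
  apply/derivable_mxP => i j; rewrite ent.
  by case: (comp_deriv (a j) (b j / a j) (x ord0 j - b j / a j) t).
rewrite derive_mx; last first.
  apply/derivable_mxP => i j; rewrite ent.
  by case: (comp_deriv (a j) (b j / a j) (x ord0 j - b j / a j) t).
apply/matrixP => i j; rewrite !mxE ent derive_val.
rewrite add0r mul1r /GRing.scale /= mulr1.
have := ha j; rewrite lt0r => /andP[hj _].
by field.
Qed.

Theorem theorem2 (R : realType) (n : nat) (hn : (2 <= n)%N)
  (a b : 'I_n -> R) (ha : forall j, 0 < a j)
  (xmin xmax : 'I_n -> R) (lam : set 'rV[R]_n)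
  (hlam : lam `<=` box xmin xmax)
  (hxe : interior lam (equilibrium a b)) :
  ext_jump_set a b (box xmin xmax) lam = box xmin xmax.
Proof.
apply/seteqP; split; first by move=> x [].
move=> x hx; split => //.
exists (sol a b x); split; first exact: sol_is_solution.
move: hxe; rewrite /interior /= => /nbhs_ballP [e /= e0 he].
pose d j := x ord0 j - b j / a j.
pose t := \sum_j (`|d j| / (e * a j)).
have tj : forall j, `|d j| / (e * a j) <= t.
  move=> j; rewrite /t (bigD1 j) //= lerDl sumr_ge0 // => k _.
  by rewrite divr_ge0 // mulr_ge0 // ltW.
exists t; split.
  by rewrite sumr_ge0 // => k _; rewrite divr_ge0 // mulr_ge0 // ltW.
apply: he; split => // i j.
rewrite -ball_normE /ball_ /= !mxE.
rewrite opprD addrA subrr add0r normrN normrM (gtr0_norm (expR_gt0 _)).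
rewrite mulNr expRN -/(d j) ltr_pdivrMr ?expR_gt0 //.
have aj := ha j.
have h1 : `|d j| <= e * (a j * t).
  have := tj j; rewrite ler_pdivrMr ?mulr_gt0 //.
  by move=> h; apply: le_trans h _; rewrite le_eqVlt; apply/orP; left; apply/eqP; ring.
have h2 : a j * t < expR (a j * t).
  by apply: lt_le_trans (expR_ge1Dx _); rewrite ltrDr.
by apply: le_lt_trans h1 _; rewrite ltr_pM2l.
Qed.
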